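(* There is no functional $M_o$ of type level $3$, computable (Kleene S1–S9) in some type $2$ functional, such that $\mathsf{WPR}(M_o)$ holds.
   Context: $C=2^{\mathbb N}$; for $f\in C$, $\overline{f}n=\langle f(0),\dots,f(n-1)\rangle$ and $[\sigma]$ is the set of $g\in C$ extending $\sigma$. For $F,G:C\to\mathbb N$, $\mathsf{LOC}(F,G)$ means $(\forall f,g\in C)\big(g\in[\overline{f}G(f)]\to F(g)\le G(f)\big)$. $\mathsf{WPR}(M_o)$ (weak Pincherle realiser) means $(\forall F^2,G^2)\big(\mathsf{LOC}(F,G)\to(\forall f\in C)(F(f)\le M_o(F,G))\big)$. *)

(* Defs.v *)
From Stdlib Require Import List Arith.
From mathcomp Require Import ssreflect ssrbool ssrnat eqtype seq choice.
Import ListNotations.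

Definition Cantor := nat -> bool.

Definition in_nbhd (f : Cantor) (n : nat) (g : Cantor) : Prop :=
  forall i, (i < n)%coq_nat -> g i = f i.

Definition LOC (F G : Cantor -> nat) : Prop :=
  forall f g : Cantor, in_nbhd f (G f) g -> (F g <= G f)%coq_nat.

Definition WPR (Mo : (Cantor -> nat) -> (Cantor -> nat) -> nat) : Prop :=
  forall F G : Cantor -> nat, LOC F G -> forall f : Cantor, (F f <= Mo F G)%coq_nat.

(** Kleene computability S1-S9 for argument lists of types 0, 1, 2.
    An argument tuple is (ns, fs, Fs): type-0, type-1 and type-2 arguments.
    Indices are natural numbers, decoded by CodeSeq.decode as a list
    [tag; parameters...]. *)
Definition Type1 := nat -> nat.
Definition Type2 := (nat -> nat) -> nat.

Definition move_front {A : Type} (k : nat) (l : list A) : option (list A) :=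
  match List.nth_error l k with
  | Some a => Some (a :: (List.firstn k l ++ List.skipn (S k) l))
  | None => None
  end.

Inductive kleene : nat -> list nat -> list Type1 -> list Type2 -> nat -> Prop :=
| S1 e x ns fs Fs :
    CodeSeq.decode e = [:: 1] ->
    kleene e (x :: ns) fs Fs (S x)
| S2 e q ns fs Fs :
    CodeSeq.decode e = [:: 2; q] ->
    kleene e ns fs Fs q
| S3 e x ns fs Fs :
    CodeSeq.decode e = [:: 3] ->
    kleene e (x :: ns) fs Fs x
| S4 e e1 e2 ns fs Fs a b :
    CodeSeq.decode e = [:: 4; e1; e2] ->
    kleene e2 ns fs Fs a ->
    kleene e1 (a :: ns) fs Fs b ->
    kleene e ns fs Fs b
| S5_0 e e1 e2 ns fs Fs b :
    CodeSeq.decode e = [:: 5; e1; e2] ->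
    kleene e1 ns fs Fs b ->
    kleene e (0 :: ns) fs Fs b
| S5_S e e1 e2 x ns fs Fs a b :
    CodeSeq.decode e = [:: 5; e1; e2] ->
    kleene e (x :: ns) fs Fs a ->
    kleene e2 (a :: x :: ns) fs Fs b ->
    kleene e (S x :: ns) fs Fs b
(* S6: permutation of arguments of the same type
   (move the k-th argument of type t to the front; these generate all
   permutations) *)
| S6_0 e k e1 ns ns' fs Fs b :
    CodeSeq.decode e = [:: 6; 0; k; e1] ->
    move_front k ns = Some ns' ->
    kleene e1 ns' fs Fs b ->
    kleene e ns fs Fs b
| S6_1 e k e1 ns fs fs' Fs b :
    CodeSeq.decode e = [:: 6; 1; k; e1] ->
    move_front k fs = Some fs' ->
    kleene e1 ns fs' Fs b ->
    kleene e ns fs Fs b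
| S6_2 e k e1 ns fs Fs Fs' b :
    CodeSeq.decode e = [:: 6; 2; k; e1] ->
    move_front k Fs = Some Fs' ->
    kleene e1 ns fs Fs' b ->
    kleene e ns fs Fs b
| S7 e x ns f fs Fs :
    CodeSeq.decode e = [:: 7] ->
    kleene e (x :: ns) (f :: fs) Fs (f x)
| S8 e d ns fs F Fs (h : nat -> nat) :
    CodeSeq.decode e = [:: 8; d] ->
    (forall n, kleene d (n :: ns) fs (F :: Fs) (h n)) ->
    kleene e ns fs (F :: Fs) (F h)
| S9 e a ns fs Fs b :
    CodeSeq.decode e = [:: 9] ->
    kleene a ns fs Fs b ->
    kleene e (a :: ns) fs Fs b.

(* A functional F : C -> N is passed to a Kleene computation as the total
   type-2 functional  g |-> F (fun n => g n != 0)  (i.e. F applied to the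
   retraction min(1, g) of Baire space onto Cantor space). *)
Definition ext2 (F : Cantor -> nat) : Type2 :=
  fun g => F (fun n => g n != 0).

Definition computable_in
    (Mo : (Cantor -> nat) -> (Cantor -> nat) -> nat) (Phi : Type2) : Prop :=
  exists e : nat, forall F G : Cantor -> nat,
    kleene e [] [] [ext2 F; ext2 G; Phi] (Mo F G).

(* Main.v *)
Require Import Defs.
From Stdlib Require Import List Arith FunctionalExtensionality.
From Stdlib Require Import ClassicalEpsilon Classical.
From mathcomp Require Import ssreflect ssrfun ssrbool ssrnat eqtype seq choice.
From mathcomp Require Import classical_sets.
Set Implicit Arguments.

Definition cant (h : nat -> nat) : Cantor := fun n => h n != 0.
Definition Orc := nat -> (nat -> nat) -> nat -> Prop.

Inductive kI (o : Orc) : nat -> list nat -> list nat -> nat -> Prop :=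
| I1 e x ns ix : CodeSeq.decode e = [:: 1] -> kI o e (x :: ns) ix (S x)
| I2 e q ns ix : CodeSeq.decode e = [:: 2; q] -> kI o e ns ix q
| I3 e x ns ix : CodeSeq.decode e = [:: 3] -> kI o e (x :: ns) ix x
| I4 e e1 e2 ns ix a b : CodeSeq.decode e = [:: 4; e1; e2] ->
    kI o e2 ns ix a -> kI o e1 (a :: ns) ix b -> kI o e ns ix b
| I5_0 e e1 e2 ns ix b : CodeSeq.decode e = [:: 5; e1; e2] ->
    kI o e1 ns ix b -> kI o e (0 :: ns) ix b
| I5_S e e1 e2 x ns ix a b : CodeSeq.decode e = [:: 5; e1; e2] ->
    kI o e (x :: ns) ix a -> kI o e2 (a :: x :: ns) ix b -> kI o e (S x :: ns) ix b
| I6_0 e k e1 ns ns' ix b : CodeSeq.decode e = [:: 6; 0; k; e1] ->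
    move_front k ns = Some ns' -> kI o e1 ns' ix b -> kI o e ns ix b
| I6_2 e k e1 ns ix ix' b : CodeSeq.decode e = [:: 6; 2; k; e1] ->
    move_front k ix = Some ix' -> kI o e1 ns ix' b -> kI o e ns ix b
| I8 e d ns i ix h v : CodeSeq.decode e = [:: 8; d] ->
    (forall n, kI o d (n :: ns) (i :: ix) (h n)) -> o i h v -> kI o e ns (i :: ix) v
| I9 e a ns ix b : CodeSeq.decode e = [:: 9] -> kI o a ns ix b -> kI o e (a :: ns) ix b.

Lemma kI_mono (o o' : Orc) : (forall i h v, o i h v -> o' i h v) ->
  forall e ns ix b, kI o e ns ix b -> kI o' e ns ix b.
Proof.
intros Ho e ns ix b H; induction H;
 [eapply I1|eapply I2|eapply I3|eapply I4|eapply I5_0|eapply I5_S|eapply I6_0|eapply I6_2|eapply I8|eapply I9]; eauto.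
Qed.
Arguments kI_mono {o o'} _ {e ns ix b}.


Ltac unif_dec :=
  repeat match goal with
  | H1 : CodeSeq.decode ?e = _, H2 : CodeSeq.decode ?e = _ |- _ =>
      rewrite H1 in H2; injection H2; clear H2; intros; subst
  end.

Lemma kI_det (o : Orc) : (forall i h v v', o i h v -> o i h v' -> v = v') ->
  forall e ns ix b, kI o e ns ix b -> forall b', kI o e ns ix b' -> b = b'.
Proof.
intros Hf e ns ix b H; induction H; intros b' H'; inversion H'; subst;
  unif_dec; try congruence;
  repeat match goal with
  | H1 : move_front ?k ?l = Some _, H2 : move_front ?k ?l = Some _ |- _ =>
      rewrite H1 in H2; injection H2; clear H2; intros; subst
  end;
  repeat match goal with
  | IH : forall b', kI o ?x ?y ?z b' -> ?a = b', H2 : kI o ?x ?y ?z ?c |- _ =>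
      have := IH _ H2; clear H2; intro; subst
  end; auto.
have E : h = h0 by apply functional_extensionality => n; eauto.
subst; eauto.
Qed.

Lemma nth_error_map' {A B} (g : A -> B) l k :
  List.nth_error (map g l) k = option_map g (List.nth_error l k).
Proof. revert k; induction l; destruct k; simpl; auto. Qed.
Lemma firstn_map' {A B} (g : A -> B) l k :
  List.firstn k (map g l) = map g (List.firstn k l).
Proof. revert k; induction l; destruct k; simpl; auto; f_equal; auto. Qed.
Lemma skipn_map' {A B} (g : A -> B) l k :
  List.skipn k (map g l) = map g (List.skipn k l).
Proof. revert k; induction l; destruct k; simpl; auto. Qed.

Lemma mf_map {A B} (g : A -> B) k l :
  move_front k (map g l) = option_map (map g) (move_front k l).
Proof.
unfold move_front. rewrite nth_error_map' firstn_map' skipn_map'.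
destruct (List.nth_error l k); simpl; auto. by rewrite map_cat.
Qed.

Lemma kI_to_k (o : Orc) (T : nat -> Type2) :
  (forall i h v, o i h v -> T i h = v) ->
  forall e ns ix b, kI o e ns ix b -> kleene e ns [::] (map T ix) b.
Proof.
intros HT e ns ix b H; induction H.
- by apply S1.
- by apply S2.
- by apply S3.
- eapply S4; eauto.
- eapply S5_0; eauto.
- eapply S5_S; eauto.
- eapply S6_0; eauto.
- eapply S6_2; eauto. by rewrite mf_map H0.
- rewrite -(HT _ _ _ H2) /=. eapply S8; eauto.
- eapply S9; eauto.
Qed.

Definition FixO (o : Orc) := forall e d ns i ix h, CodeSeq.decode e = [:: 8; d] ->
  (forall n, kI o d (n :: ns) (i :: ix) (h n)) -> exists v, o i h v.

Lemma k_to_kI (o : Orc) (T : nat -> Type2) :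
  FixO o -> (forall i h v, o i h v -> T i h = v) ->
  forall e ns fs Fs b, kleene e ns fs Fs b -> fs = [::] ->
  forall ix, Fs = map T ix -> kI o e ns ix b.
Proof.
intros Hfix HT e ns fs Fs b H; induction H; intros Efs ix0 EFs; subst.
- by apply I1.
- by apply I2.
- by apply I3.
- eapply I4; eauto.
- eapply I5_0; eauto.
- eapply I5_S; eauto.
- eapply I6_0; eauto.
- unfold move_front in H0. destruct k; simpl in H0; discriminate.
- rewrite mf_map in H0. destruct (move_front k ix0) as [ix'|] eqn:E; simpl in H0;
    [|discriminate].
  injection H0; intros; subst. eapply I6_2; eauto.
- discriminate.
- destruct ix0 as [|i ix0]; simpl in EFs; [discriminate|].
  injection EFs; intros; subst.
  have Hs : forall n, kI o d (n :: ns) (i :: ix0) (h n) by intros n; eauto.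
  destruct (Hfix _ _ _ _ _ _ H Hs) as [v Hv].
  rewrite (HT _ _ _ Hv). eapply I8; eauto.
- eapply I9; eauto.
Qed.

Definition codeS e ns ix := CodeSeq.code [:: e; CodeSeq.code ns; CodeSeq.code ix].

Lemma codeS_inj e ns ix e' ns' ix' :
  codeS e ns ix = codeS e' ns' ix' -> e = e' /\ ns = ns' /\ ix = ix'.
Proof.
move=> H; have := congr1 CodeSeq.decode H; rewrite /codeS !CodeSeq.codeK.
case=> -> H1 H2; split; first done.
have := congr1 CodeSeq.decode H1; have := congr1 CodeSeq.decode H2.
by rewrite !CodeSeq.codeK.
Qed.
Arguments codeS_inj {e ns ix e' ns' ix'}.


Definition event (o : Orc) e ns ix (h : nat -> nat) := exists d i ix',
  ix = i :: ix' /\ CodeSeq.decode e = [:: 8; d] /\ forall n, kI o d (n :: ns) ix (h n).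

Definition produces (o : Orc) k (c : Cantor) := exists e ns ix h,
  k = codeS e ns ix /\ event o e ns ix h /\ forall n, c n = (h n != 0).

Lemma produces_mono (o o' : Orc) : (forall i h v, o i h v -> o' i h v) ->
  forall k c, produces o k c -> produces o' k c.
Proof.
move=> Ho k c [e [ns [ix [h [Hk [[d [i [ix' [E1 [E2 E3]]]]] Hc]]]]]].
exists e, ns, ix, h; split; first done; split; last done.
exists d, i, ix'; split; first done; split; first done.
move=> n; exact: (kI_mono Ho).
Qed.
Arguments produces_mono {o o'} _ {k c}.


Lemma produces_fun (o : Orc) : (forall i h v v', o i h v -> o i h v' -> v = v') ->
  forall k c c', produces o k c -> produces o k c' -> forall n, c n = c' n.
Proof.
move=> Hf k c c' [e [ns [ix [h [Hk [[d [i [ix' [E1 [E2 E3]]]]] Hc]]]]]]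
  [e2 [ns2 [ix2 [h2 [Hk2 [[d2 [i2 [ix2' [F1 [F2 F3]]]]] Hc2]]]]]] n.
rewrite Hk in Hk2; have [? [? E6]] := codeS_inj Hk2; subst.
case: E6 => ? ?; subst.
rewrite E2 in F2; case: F2 => ?; subst.
rewrite Hc Hc2; by rewrite (kI_det Hf (E3 n) (F3 n)).
Qed.

Definition oA (Phi : Type2) (A : set (Cantor * nat)) : Orc := fun i h v =>
  match i with
  | 0 => v = 0 /\ exists w, A (cant h, w)
  | 1 => A (cant h, v)
  | _ => v = Phi h
  end.

Lemma oA_mono Phi (A B : set (Cantor * nat)) : (forall p, A p -> B p) ->
  forall i h v, oA Phi A i h v -> oA Phi B i h v.
Proof.
move=> AB [|[|i]] h v /=; last done.
- by case=> -> [w Hw]; split; last exists w; auto.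
- by apply: AB.
Qed.

Lemma oA_fun Phi (A : set (Cantor * nat)) :
  (forall c v v', A (c, v) -> A (c, v') -> v = v') ->
  forall i h v v', oA Phi A i h v -> oA Phi A i h v' -> v = v'.
Proof.
move=> Af [|[|i]] h v v' /=.
- by case=> -> _ [-> _].
- by apply: Af.
- by move=> -> ->.
Qed.

Definition Good Phi (A : set (Cantor * nat)) :=
  (forall c v v', A (c, v) -> A (c, v') -> v = v') /\
  (forall c v, A (c, v) -> exists k, v = S k /\ produces (oA Phi A) k c).

Lemma exists_max Phi : exists A, Good Phi A /\ FixO (oA Phi A).
Proof.
have [|A [[Af Ainv] Amax]] := @Zorn_bigcup (Cantor * nat) (Good Phi).
  move=> F FG Ftot; split.
  - move=> c v v' [X FX Xv] [Y FY Yv].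
    case: (Ftot X Y FX FY) => [XY|YX].
    + exact: (proj1 (FG Y FY) c v v' (XY _ Xv) Yv).
    + exact: (proj1 (FG X FX) c v v' Xv (YX _ Yv)).
  - move=> c v [X FX Xv].
    have [k [-> Hk]] := proj2 (FG X FX) c v Xv.
    exists k; split; first done.
    apply: (produces_mono _ Hk); apply: oA_mono.
    by move=> p Xp; exists X.
exists A; split; first by split.
move=> e d ns i ix h Hd Hs.
have Hw : exists w, A (cant h, w).
  apply: NNPP => no.
  pose B := fun p => A p \/ p = (cant h, S (codeS e ns (i :: ix))).
  apply: (Amax B).
    split; first by move=> p Ap; left.
    move=> BA; apply: no; exists (S (codeS e ns (i :: ix))).
    by apply: BA; right.
  split.
  - move=> c v v' [Av|Ev] [Av'|Ev'].
    + exact: Af Av Av'.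
    + case: Ev' => E1 E2; subst c; by case: no; exists v.
    + case: Ev => E1 E2; subst c; by case: no; exists v'.
    + by case: Ev => _ ->; case: Ev' => _ ->.
  - move=> c v [Av|Ev].
    + have [k [-> Hk]] := Ainv c v Av.
      exists k; split; first done.
      apply: (produces_mono _ Hk); apply: oA_mono => p Ap; by left.
    + case: Ev => -> ->.
      exists (codeS e ns (i :: ix)); split; first done.
      exists e, ns, (i :: ix), h; split; first done; split; last done.
      exists d, i, ix; split; first done; split; first done.
      move=> n; apply: (kI_mono _ (Hs n)); apply: oA_mono => p Ap; by left.
case: i Hs => [|[|i]] Hs /=.
- by case: Hw => w Hw; exists 0; split; last exists w.
- by case: Hw => w Hw; exists w.
- by exists (Phi h).
Qed.

Definition Gd (A : set (Cantor * nat)) (dflt : nat) (c : Cantor) : nat :=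
  match excluded_middle_informative (exists w, A (c, w)) with
  | left H => proj1_sig (constructive_indefinite_description _ H)
  | right _ => dflt
  end.

Lemma Gd_val (A : set (Cantor * nat)) dflt c v :
  (forall c v v', A (c, v) -> A (c, v') -> v = v') -> A (c, v) -> Gd A dflt c = v.
Proof.
move=> Af Av; rewrite /Gd; case: excluded_middle_informative => [H|H].
- case: (constructive_indefinite_description _ H) => w Hw /=; exact: Af Hw Av.
- by case: H; exists v.
Qed.

Lemma Gd_none (A : set (Cantor * nat)) dflt c :
  ~ (exists w, A (c, w)) -> Gd A dflt c = dflt.
Proof.
by move=> H; rewrite /Gd; case: excluded_middle_informative.
Qed.

Theorem theorem3p14 :
  ~ exists (Mo : (Cantor -> nat) -> (Cantor -> nat) -> nat) (Phi : Type2),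
      computable_in Mo Phi /\ WPR Mo.
Proof.
move=> [Mo [Phi [[e0 He0] HW]]].
have [A [[Af Ainv] Afix]] := exists_max Phi.
pose o := oA Phi A.
have ofun := @oA_fun Phi A Af.
pose F0 : Cantor -> nat := fun _ => 0.
pose T0 : nat -> Type2 := fun i => match i with
  | 0 => ext2 F0 | 1 => ext2 (Gd A 0) | _ => Phi end.
have agree0 : forall i h v, o i h v -> T0 i h = v.
  move=> [|[|i]] h v /=.
  - by case=> ->.
  - move=> Hv; rewrite /ext2; exact: (@Gd_val A _ _ _ Af Hv).
  - by move=> ->.
have HK0 : kI o e0 [::] [:: 0; 1; 2] (Mo F0 (Gd A 0)).
  exact: (k_to_kI T0 Afix agree0 (He0 F0 (Gd A 0)) erefl [:: 0; 1; 2] erefl).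
set M := Mo F0 (Gd A 0) in HK0.
pose pt k : Cantor := epsilon (inhabits (fun _ : nat => false)) (produces o k).
pose f : Cantor := fun k => ~~ pt k k.
have key : forall c v, A (c, v) -> exists k, v = S k /\ f k <> c k.
  move=> c v Av; have [k [-> Hk]] := Ainv c v Av.
  exists k; split; first done.
  have Hpt : produces o k (pt k) by apply: epsilon_spec; exists c.
  rewrite /f (produces_fun ofun Hpt Hk k).
  by case: (c k).
pose N := S M.
pose F' : Cantor -> nat := fun g =>
  if excluded_middle_informative (g = f) then N else 0.
pose G' := Gd A N.
pose T' : nat -> Type2 := fun i => match i with
  | 0 => ext2 F' | 1 => ext2 G' | _ => Phi end.
have agree' : forall i h v, o i h v -> T' i h = v.
  move=> [|[|i]] h v /=.
  - case=> -> [w Hw]; rewrite /ext2 /F'.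
    case: excluded_middle_informative => // E.
    have [k [_ Hk]] := key _ _ Hw.
    by case: Hk; rewrite -E.
  - move=> Hv; rewrite /ext2; exact: (@Gd_val A _ _ _ Af Hv).
  - by move=> ->.
have HK' : kleene e0 [::] [::] (map T' [:: 0; 1; 2]) M := kI_to_k T' agree' HK0.
pose o' : Orc := fun i h v => v = T' i h.
have fix' : FixO o' by move=> *; eexists; reflexivity.
have ag' : forall i h v, o' i h v -> T' i h = v by move=> i h v ->.
have o'fun : forall i h v v', o' i h v -> o' i h v' -> v = v' by move=> i h v v' -> ->.
have D1 := k_to_kI T' fix' ag' HK' erefl [:: 0; 1; 2] erefl.
have D2 := k_to_kI T' fix' ag' (He0 F' G') erefl [:: 0; 1; 2] erefl.
have EM := kI_det o'fun D1 D2.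
have LOC' : LOC F' G'.
  move=> c g Hn; rewrite /F'.
  case: excluded_middle_informative => E; last by apply: le_0_n.
  subst g.
  case: (classic (exists w, A (c, w))) => [[w Hw]|Hno].
  - have [k [Ew Hk]] := key _ _ Hw.
    rewrite /G' (@Gd_val A N _ _ Af Hw) Ew in Hn.
    by case: Hk; apply: Hn; apply: Nat.lt_succ_diag_r.
  - by rewrite /G' (@Gd_none A N _ Hno).
have := HW F' G' LOC' f.
rewrite -EM /F'; case: excluded_middle_informative => [Hff|nf]; last by case: nf.
rewrite /N; exact: Nat.nle_succ_diag_l.
Qed.
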